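(* Let $\mathbb{S}\subseteq\mathbb{R}$ be an interval, let $\gamma>0$, let $Q:\mathbb{S}\to\mathbb{R}$ be differentiable with $q=Q'$, and let $$H(z)=\gamma\log\big(1+e^{Q(z)/\gamma}\big),\qquad p(z)=\frac{1}{1+e^{-Q(z)/\gamma}},$$ with $H$ twice continuously differentiable on $\mathbb{S}$. Then the scalar matching loss $\mathcal{L}_m(\hat s,s)=H(\hat s)-H(s)-(\hat s-s)H'(s)$ is convex in $\hat s$ over $\mathbb{S}$ (for all $s\in\mathbb{S}$) if and only if $$q'(z)+\frac{1}{\gamma}\,[1-p(z)]\,q^2(z)\ge0\quad\text{for all }z\in\mathbb{S}.$$
   Context: $H$ is the $\gamma$-regularized composite Softplus primitive; its derivative (the link) is $H'(z)=q(z)p(z)$. *)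

(* Defs.v *)
From Stdlib Require Import Reals.
From Coquelicot Require Import Coquelicot.
Open Scope R_scope.

Definition is_interval (S : R -> Prop) : Prop :=
  forall x y z, S x -> S z -> x <= y -> y <= z -> S y.

(* f has derivative l at x relative to S (one-sided at endpoints). *)
Definition is_derive_within (S : R -> Prop) (f : R -> R) (x l : R) : Prop :=
  filterlim (fun y => (f y - f x) / (y - x))
    (within (fun y => S y /\ y <> x) (locally x)) (locally l).

Definition continuous_within (S : R -> Prop) (f : R -> R) (x : R) : Prop :=
  filterlim f (within S (locally x)) (locally (f x)).

Definition differentiable_on (S : R -> Prop) (f : R -> R) : Prop :=
  forall x, S x -> exists l, is_derive_within S f x l.

Definition C2_on (S : R -> Prop) (f : R -> R) : Prop :=
  exists f1 f2 : R -> R,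
    forall x, S x ->
      is_derive_within S f x (f1 x) /\
      is_derive_within S f1 x (f2 x) /\
      continuous_within S f2 x.

Definition convex_on (S : R -> Prop) (f : R -> R) : Prop :=
  forall x y t, S x -> S y -> 0 <= t <= 1 ->
    f (t * x + (1 - t) * y) <= t * f x + (1 - t) * f y.

Definition Hsp (gam : R) (Q : R -> R) (z : R) : R :=
  gam * ln (1 + exp (Q z / gam)).

Definition psp (gam : R) (Q : R -> R) (z : R) : R :=
  1 / (1 + exp (- Q z / gam)).

(* scalar matching loss, with dH_s = H'(s) *)
Definition matching_loss (H : R -> R) (dH_s s sh : R) : R :=
  H sh - H s - (sh - s) * dH_s.

(* Main.v *)
Require Import Defs.
From Stdlib Require Import Reals Lra.
From Coquelicot Require Import Coquelicot.
Open Scope R_scope.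

Definition Dl (S : R -> Prop) f x l := forall eps, 0 < eps -> exists d, 0 < d /\
  forall y, S y -> y <> x -> Rabs (y - x) < d -> Rabs ((f y - f x)/(y - x) - l) < eps.

Lemma Dl_equiv S f x l : is_derive_within S f x l <-> Dl S f x l.
Proof.
split.
- intros H eps Heps.
  destruct (H (ball l (mkposreal eps Heps))) as [d Hd].
  { exists (mkposreal eps Heps); auto. }
  exists d; split; [apply cond_pos|].
  intros y Sy Hy Hyd. apply (Hd y); auto.
- intros H A [e He]. destruct (H e (cond_pos e)) as [d [Hd0 Hd]].
  exists (mkposreal d Hd0). intros y Hy [Sy Hyx]. apply He. apply Hd; auto.
Qed.

Lemma lim_mult {T} (F : (T -> Prop) -> Prop) {FF : Filter F} f g a b :
  filterlim f F (locally a) -> filterlim g F (locally b) ->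
  filterlim (fun y => f y * g y) F (locally (a * b)).
Proof. intros Hf Hg. exact (filterlim_comp_2 f g Rmult Hf Hg (filterlim_mult a b)). Qed.

Lemma lim_plus {T} (F : (T -> Prop) -> Prop) {FF : Filter F} f g a b :
  filterlim f F (locally a) -> filterlim g F (locally b) ->
  filterlim (fun y => f y + g y) F (locally (a + b)).
Proof. intros Hf Hg. exact (filterlim_comp_2 f g Rplus Hf Hg (filterlim_plus a b)). Qed.

Lemma lim_eq {T} (F : (T -> Prop) -> Prop) g (a b : R) :
  filterlim g F (locally a) -> a = b -> filterlim g F (locally b).
Proof. intros H <-; exact H. Qed.

Definition Fw (S : R -> Prop) (x : R) : (R -> Prop) -> Prop := within (fun y => S y /\ y <> x) (locally x).

Global Instance Fw_filter S x : Filter (Fw S x).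
Proof. apply within_filter, locally_filter. Qed.

Lemma lim_id S x : filterlim (fun y => y) (Fw S x) (locally x).
Proof. intros A HA. unfold filtermap, Fw, within. apply (filter_imp A); auto. Qed.

Lemma deriv_cont S f x l : is_derive_within S f x l -> filterlim f (Fw S x) (locally (f x)).
Proof.
intros H. pose proof (Fw_filter S x) as FF.
apply (filterlim_ext_loc (fun y => f x + ((f y - f x)/(y - x)) * (y - x))).
- unfold Fw, within. apply filter_forall. intros y [_ Hy]. field. lra.
- eapply lim_eq. apply lim_plus; try exact _. apply filterlim_const.
  apply lim_mult; try exact _. exact H.
  eapply lim_eq. apply lim_plus; try exact _. apply lim_id. apply filterlim_const. reflexivity.
  simpl. ring.
Qed.

Lemma deriv_mult S f g x a b :
  is_derive_within S f x a -> is_derive_within S g x b ->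
  is_derive_within S (fun y => f y * g y) x (a * g x + f x * b).
Proof.
intros Hf Hg. pose proof (deriv_cont _ _ _ _ Hg) as Cg.
change (filterlim (fun y => (f y * g y - f x * g x) / (y - x)) (Fw S x) (locally (a * g x + f x * b))).
apply (filterlim_ext_loc (fun y => (f y - f x)/(y - x) * g y + f x * ((g y - g x)/(y - x)))).
- unfold Fw, within. apply filter_forall. intros y [_ Hy]. field. lra.
- apply lim_plus; try exact _. apply lim_mult; try exact _. exact Hf. exact Cg.
  apply lim_mult; try exact _. apply filterlim_const. exact Hg.
Qed.

Lemma deriv_ext S f g x l : S x -> (forall y, S y -> f y = g y) ->
  is_derive_within S f x l -> is_derive_within S g x l.
Proof.
intros Sx E H.
change (filterlim (fun y => (g y - g x) / (y - x)) (Fw S x) (locally l)).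
apply (filterlim_ext_loc (fun y => (f y - f x) / (y - x))).
- unfold Fw, within. apply filter_forall. intros y [Sy _]. rewrite !E; auto.
- exact H.
Qed.

Lemma slope_cont (g : R -> R) v (g' : R) : is_derive g v g' ->
  filterlim (fun u => if Req_EM_T u v then g' else (g u - g v)/(u - v)) (locally v) (locally g').
Proof.
intros H. apply is_derive_Reals in H.
intros A [e He]. destruct (H e (cond_pos e)) as [d Hd].
exists d. intros u Hu. apply He. destruct (Req_EM_T u v) as [E|E].
- apply ball_center.
- change (Rabs ((g u - g v)/(u - v) - g') < e).
  change (Rabs (u - v) < d) in Hu.
  replace u with (v + (u - v)) at 1 by ring. apply Hd. lra. exact Hu.
Qed.

Lemma deriv_chain S Q (g : R -> R) x l (g' : R) : is_derive_within S Q x l -> is_derive g (Q x) g' ->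
  is_derive_within S (fun y => g (Q y)) x (g' * l).
Proof.
intros HQ Hg. pose proof (deriv_cont _ _ _ _ HQ) as CQ.
pose proof (slope_cont _ _ _ Hg) as Hp.
change (filterlim (fun y => (g (Q y) - g (Q x)) / (y - x)) (Fw S x) (locally (g' * l))).
apply (filterlim_ext_loc (fun y => (if Req_EM_T (Q y) (Q x) then g' else (g (Q y) - g (Q x))/(Q y - Q x)) * ((Q y - Q x)/(y - x)))).
- unfold Fw, within. apply filter_forall. intros y [_ Hy].
  destruct (Req_EM_T (Q y) (Q x)) as [E|E].
  + rewrite E. unfold Rdiv. ring.
  + field. split; lra.
- apply lim_mult; try exact _.
  + exact (filterlim_comp _ _ _ Q _ (Fw S x) (locally (Q x)) (locally g') CQ Hp).
  + exact HQ.
Qed.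

Lemma near_point S a b x eps : is_interval S -> S a -> S b -> a < b -> S x -> 0 < eps ->
  exists y, S y /\ y <> x /\ Rabs (y - x) < eps.
Proof.
intros HI Sa Sb ab Sx He.
destruct (Rlt_le_dec x b) as [xb|bx].
- exists (Rmin b (x + eps/2)). repeat split.
  + apply (HI x _ b); auto. apply Rmin_case; lra. apply Rmin_l.
  + apply Rmin_case; lra.
  + assert (x < Rmin b (x + eps/2) <= x + eps/2) by (split; [apply Rmin_case; lra | apply Rmin_r]).
    rewrite Rabs_right; lra.
- exists (Rmax a (x - eps/2)). repeat split.
  + apply (HI a _ x); auto. apply Rmax_l. apply Rmax_case; lra.
  + apply Rmax_case; lra.
  + assert (x - eps/2 <= Rmax a (x - eps/2) < x) by (split; [apply Rmax_r | apply Rmax_case; lra]).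
    rewrite Rabs_left; lra.
Qed.

Lemma deriv_unique S a b f x l1 l2 : is_interval S -> S a -> S b -> a < b -> S x ->
  is_derive_within S f x l1 -> is_derive_within S f x l2 -> l1 = l2.
Proof.
intros HI Sa Sb ab Sx H1 H2.
assert (PF : ProperFilter' (Fw S x)).
{ constructor; [|exact _]. intros HF. destruct HF as [e He].
  destruct (near_point S a b x e HI Sa Sb ab Sx (cond_pos e)) as [y [Sy [yx Hy]]].
  apply (He y); auto. }
exact (filterlim_locally_unique _ _ _ H1 H2).
Qed.

Lemma Dl_restrict (S S' : R -> Prop) f x l : (forall y, S' y -> S y) -> Dl S f x l -> Dl S' f x l.
Proof.
intros HS H eps He. destruct (H eps He) as [d [Hd H']]. exists d; split; auto.
Qed.

Lemma Dl_lin S f x l c k m : Dl S f x l -> Dl S (fun t => c * f t + k * t + m) x (c * l + k).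
Proof.
intros H eps He.
destruct (H (eps / (Rabs c + 1))) as [d [Hd H']].
{ apply Rdiv_lt_0_compat; auto. pose proof (Rabs_pos c); lra. }
exists d; split; auto. intros y Sy yx Hy.
replace ((c * f y + k * y + m - (c * f x + k * x + m)) / (y - x) - (c * l + k))
  with (c * ((f y - f x) / (y - x) - l)) by (field; lra).
rewrite Rabs_mult. specialize (H' y Sy yx Hy).
pose proof (Rabs_pos c).
apply Rle_lt_trans with ((Rabs c + 1) * Rabs ((f y - f x) / (y - x) - l)).
{ pose proof (Rabs_pos ((f y - f x) / (y - x) - l)). nra. }
apply Rmult_lt_compat_l with (r := Rabs c + 1) in H'; [|lra].
replace ((Rabs c + 1) * (eps / (Rabs c + 1))) with eps in H' by (field; lra). exact H'.
Qed.

Lemma div_np1 u v : 0 <= u -> v < 0 -> u / v <= 0.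
Proof. intros. unfold Rdiv. pose proof (Rinv_lt_0_compat v H0). nra. Qed.
Lemma div_np2 u v : u <= 0 -> 0 < v -> u / v <= 0.
Proof. intros. unfold Rdiv. pose proof (Rinv_0_lt_compat v H0). nra. Qed.

Lemma mono_aux S f d a b e : is_interval S -> (forall x, S x -> Dl S f x (d x) /\ 0 <= d x) ->
  S a -> S b -> a <= b -> 0 < e -> f a + e * a <= f b + e * b.
Proof.
intros HI HD Sa Sb ab He.
set (g := fun x => f x + e * x).
set (E := fun x => a <= x <= b /\ forall y, a <= y <= x -> g a <= g y).
assert (Eb : bound E). { exists b. intros x [[_ H] _]. exact H. }
assert (Ea : exists x, E x). { exists a. split. lra. intros y Hy. replace y with a by lra. lra. }
destruct (completeness E Eb Ea) as [c [Hub Hlub]].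
assert (ac : a <= c). { apply Hub. destruct Ea. unfold E. split. lra. intros y Hy. replace y with a by lra. lra. }
assert (cb : c <= b). { apply Hlub. intros x [[_ H] _]. exact H. }
assert (Sc : S c). { apply (HI a c b); auto. }
destruct (HD c Sc) as [Dc dc].
destruct (Dc e He) as [del [Hdel Hc]].
assert (Key : forall y, S y -> y <> c -> Rabs (y - c) < del -> (g y - g c) / (y - c) > 0).
{ intros y Sy yc Hy. specialize (Hc y Sy yc Hy). apply Rabs_def2 in Hc.
  unfold g. replace ((f y + e * y - (f c + e * c)) / (y - c)) with ((f y - f c) / (y - c) + e) by (field; lra).
  lra. }
assert (C1 : forall y, a <= y < c -> g a <= g y).
{ intros y Hy. destruct (Rle_lt_dec c y) as [H|H]; [lra|].
  assert (~ (forall x, E x -> x <= y)).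
  { intros Hx. assert (c <= y) by (apply Hlub; exact Hx). lra. }
  apply Classical_Pred_Type.not_all_ex_not in H0. destruct H0 as [x Hx].
  apply Classical_Prop.imply_to_and in Hx. destruct Hx as [[Hx1 Hx2] Hx3].
  apply Hx2. lra. }
assert (C2 : g a <= g c).
{ destruct (Req_dec a c) as [E1|E1]. subst; lra.
  set (y := Rmax a (c - del/2)).
  assert (a <= y < c) by (unfold y; split; [apply Rmax_l| apply Rmax_case; lra]).
  assert (c - del/2 <= y) by apply Rmax_r.
  assert (Sy : S y) by (apply (HI a y b); auto; lra).
  assert (Hy : Rabs (y - c) < del) by (rewrite Rabs_left; lra).
  specialize (Key y Sy ltac:(lra) Hy).
  assert (g y < g c).
  { assert (y - c < 0) by lra.
    destruct (Rle_lt_dec (g c) (g y)); auto.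
    assert ((g y - g c) / (y - c) <= 0).
    { apply div_np1; lra. } lra. }
  specialize (C1 y ltac:(lra)). lra. }
assert (Ec : forall y, a <= y <= c -> g a <= g y).
{ intros y Hy. destruct (Req_dec y c). subst; auto. apply C1; lra. }
destruct (Req_dec c b) as [cb'|cb'].
- subst c. apply Ec. lra.
- exfalso. set (y := Rmin b (c + del/2)).
  assert (c < y <= b) by (unfold y; split; [apply Rmin_case; lra | apply Rmin_l]).
  assert (y <= c + del/2) by apply Rmin_r.
  assert (E y).
  { split. lra. intros z Hz. destruct (Rle_lt_dec z c). apply Ec; lra.
    assert (Sz : S z) by (apply (HI a z b); auto; lra).
    assert (Hz' : Rabs (z - c) < del) by (rewrite Rabs_right; lra).
    specialize (Key z Sz ltac:(lra) Hz').
    assert (g c < g z).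
    { destruct (Rle_lt_dec (g z) (g c)); auto.
      assert ((g z - g c) / (z - c) <= 0).
      { apply div_np2; lra. } lra. }
    specialize (Ec c ltac:(lra)). lra. }
  assert (y <= c) by (apply Hub; auto). lra.
Qed.

Lemma mono S f d a b : is_interval S -> (forall x, S x -> Dl S f x (d x) /\ 0 <= d x) ->
  S a -> S b -> a <= b -> f a <= f b.
Proof.
intros HI HD Sa Sb ab.
destruct (Req_dec a b) as [E|E]. subst; lra.
destruct (Rle_lt_dec (f a) (f b)) as [H|H]; auto.
set (e := (f a - f b) / (2 * (b - a))).
assert (He : 0 < e) by (unfold e; apply Rdiv_lt_0_compat; lra).
pose proof (mono_aux S f d a b e HI HD Sa Sb ab He).
assert (e * (b - a) = (f a - f b) / 2) by (unfold e; field; lra).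
nra.
Qed.

Lemma tangent S H h : is_interval S -> (forall x, S x -> Dl S H x (h x)) ->
  (forall x y, S x -> S y -> x <= y -> h x <= h y) ->
  forall x y, S x -> S y -> H x + h x * (y - x) <= H y.
Proof.
intros HI HD Hm x y Sx Sy.
set (g := fun t => 1 * H t + (- h x) * t + (- H x + h x * x)).
assert (g x = 0) by (unfold g; ring).
destruct (Rle_lt_dec x y) as [xy|yx].
- set (S' := fun t => S t /\ x <= t).
  assert (HI' : is_interval S').
  { intros a b c [Sa1 Sa2] [Sc1 Sc2] ab bc. split. apply (HI a b c); auto. lra. }
  assert (g x <= g y).
  { apply (mono S' g (fun t => 1 * h t + - h x)); auto.
    - intros t [St xt]. split. apply (Dl_restrict S). intros u [Su _]; auto.
      apply Dl_lin. auto. specialize (Hm x t Sx St xt). lra.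
    - split; auto; lra.
    - split; auto. }
  unfold g in *. lra.
- set (S' := fun t => S t /\ t <= x).
  assert (HI' : is_interval S').
  { intros a b c [Sa1 Sa2] [Sc1 Sc2] ab bc. split. apply (HI a b c); auto. lra. }
  set (g2 := fun t => (-1) * H t + h x * t + (H x - h x * x)).
  assert (g2 y <= g2 x).
  { apply (mono S' g2 (fun t => (-1) * h t + h x)); auto.
    - intros t [St xt]. split. apply (Dl_restrict S). intros u [Su _]; auto.
      apply Dl_lin. auto. specialize (Hm t x St Sx xt). lra.
    - split; auto; lra.
    - split; auto; lra.
    - lra. }
  unfold g2 in *. lra.
Qed.

Lemma convex_of_tangent S H h : is_interval S ->
  (forall x y, S x -> S y -> H x + h x * (y - x) <= H y) -> convex_on S H.
Proof.
intros HI HT x y t Sx Sy Ht.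
set (z := t * x + (1 - t) * y).
assert (Sz : S z).
{ destruct (Rle_lt_dec x y).
  - apply (HI x z y); auto; unfold z; nra.
  - apply (HI y z x); auto; unfold z; nra. }
pose proof (HT z x Sz Sx). pose proof (HT z y Sz Sy).
assert (E : t * (x - z) + (1 - t) * (y - z) = 0) by (unfold z; ring).
assert (t * (H z + h z * (x - z)) <= t * H x) by (apply Rmult_le_compat_l; lra).
assert ((1 - t) * (H z + h z * (y - z)) <= (1 - t) * H y) by (apply Rmult_le_compat_l; lra).
assert (E2 : t * (H z + h z * (x - z)) + (1 - t) * (H z + h z * (y - z)) = H z + h z * (t * (x - z) + (1 - t) * (y - z))) by ring.
rewrite E in E2. lra.
Qed.

Lemma lim_right_le S f x l y c : is_interval S -> S x -> S y -> x < y -> Dl S f x l ->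
  (forall t, S t -> x < t <= y -> (f t - f x) / (t - x) <= c) -> l <= c.
Proof.
intros HI Sx Sy xy HD Hc.
destruct (Rle_lt_dec l c) as [H|H]; auto. exfalso.
destruct (HD (l - c)) as [d [Hd Hd']]. lra.
set (t := Rmin y (x + d/2)).
assert (x < t <= y) by (unfold t; split; [apply Rmin_case; lra | apply Rmin_l]).
assert (t <= x + d/2) by apply Rmin_r.
assert (St : S t) by (apply (HI x t y); auto; lra).
specialize (Hd' t St ltac:(lra) ltac:(rewrite Rabs_right; lra)).
specialize (Hc t St ltac:(lra)). apply Rabs_def2 in Hd'. lra.
Qed.

Lemma lim_left_ge S f x l w c : is_interval S -> S x -> S w -> w < x -> Dl S f x l ->
  (forall t, S t -> w <= t < x -> c <= (f t - f x) / (t - x)) -> c <= l.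
Proof.
intros HI Sx Sw wx HD Hc.
destruct (Rle_lt_dec c l) as [H|H]; auto. exfalso.
destruct (HD (c - l)) as [d [Hd Hd']]. lra.
set (t := Rmax w (x - d/2)).
assert (w <= t < x) by (unfold t; split; [apply Rmax_l | apply Rmax_case; lra]).
assert (x - d/2 <= t) by apply Rmax_r.
assert (St : S t) by (apply (HI w t x); auto; lra).
specialize (Hd' t St ltac:(lra) ltac:(rewrite Rabs_left; lra)).
specialize (Hc t St ltac:(lra)). apply Rabs_def2 in Hd'. lra.
Qed.

Lemma lim_nonneg S f x l a b : is_interval S -> S a -> S b -> a < b -> S x -> Dl S f x l ->
  (forall y, S y -> y <> x -> 0 <= (f y - f x) / (y - x)) -> 0 <= l.
Proof.
intros HI Sa Sb ab Sx HD Hc.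
destruct (Rle_lt_dec 0 l) as [H|H]; auto. exfalso.
destruct (HD (- l)) as [d [Hd Hd']]. lra.
destruct (near_point S a b x d HI Sa Sb ab Sx Hd) as [y [Sy [yx Hy]]].
specialize (Hd' y Sy yx Hy). specialize (Hc y Sy yx). apply Rabs_def2 in Hd'. lra.
Qed.

Lemma frac01 u v : 0 <= u -> u <= v -> 0 < v -> 0 <= u / v <= 1.
Proof.
intros. unfold Rdiv. pose proof (Rinv_0_lt_compat v H1). split. nra.
assert (u * / v <= v * / v) by (apply Rmult_le_compat_r; lra).
rewrite Rinv_r in H3; lra.
Qed.

Lemma convex_mono S H h : is_interval S -> convex_on S H -> (forall x, S x -> Dl S H x (h x)) ->
  forall x y, S x -> S y -> x <= y -> h x <= h y.
Proof.
intros HI HC HD x y Sx Sy xy.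
destruct (Req_dec x y) as [E|E]. subst; lra.
set (m := (H y - H x) / (y - x)).
assert (h x <= m).
{ apply (lim_right_le S H x (h x) y m HI Sx Sy ltac:(lra) (HD x Sx)).
  intros t St [xt ty].
  set (lam := (t - x) / (y - x)).
  assert (0 <= lam <= 1) by (unfold lam; apply frac01; lra).
  pose proof (HC y x lam Sy Sx H0).
  replace (lam * y + (1 - lam) * x) with t in H1 by (unfold lam; field; lra).
  assert (H t - H x <= lam * (H y - H x)) by lra.
  unfold m. apply (Rmult_le_reg_r (t - x)). lra.
  replace ((H t - H x) / (t - x) * (t - x)) with (H t - H x) by (field; lra).
  replace ((H y - H x) / (y - x) * (t - x)) with (lam * (H y - H x)) by (unfold lam; field; lra). lra. }
assert (m <= h y).
{ apply (lim_left_ge S H y (h y) x m HI Sy Sx ltac:(lra) (HD y Sy)).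
  intros t St [xt ty].
  set (lam := (t - x) / (y - x)).
  assert (0 <= lam <= 1) by (unfold lam; apply frac01; lra).
  pose proof (HC y x lam Sy Sx H1).
  replace (lam * y + (1 - lam) * x) with t in H2 by (unfold lam; field; lra).
  assert (H t - H y <= (1 - lam) * (H x - H y)) by lra.
  replace ((H t - H y) / (t - y)) with ((H y - H t) / (y - t)) by (field; lra).
  unfold m. apply (Rmult_le_reg_r (y - t)). lra.
  replace ((H y - H t) / (y - t) * (y - t)) with (H y - H t) by (field; lra).
  replace ((H y - H x) / (y - x) * (y - t)) with ((1 - lam) * (H y - H x)) by (unfold lam; field; lra). lra. }
lra.
Qed.

Definition sig (gam v : R) := 1 / (1 + exp (- v / gam)).

Lemma sig_pos gam v : 0 < sig gam v.
Proof. unfold sig. apply Rdiv_lt_0_compat. lra. pose proof (exp_pos (- v / gam)). lra. Qed.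

Lemma dH gam v : 0 < gam -> is_derive (fun v => gam * ln (1 + exp (v / gam))) v (sig gam v).
Proof.
intros Hg. auto_derive.
- pose proof (exp_pos (v / gam)). lra.
- unfold sig. replace (- v / gam) with (- (v / gam)) by (field; lra). rewrite exp_Ropp.
  pose proof (exp_pos (v / gam)). unfold Rdiv in *. set (e := exp (v * / gam)) in *. field. split; lra.
Qed.

Lemma dp gam v : 0 < gam -> is_derive (fun v => 1 / (1 + exp (- v / gam))) v (/ gam * sig gam v * (1 - sig gam v)).
Proof.
intros Hg. auto_derive.
- pose proof (exp_pos (- v / gam)). lra.
- unfold sig. pose proof (exp_pos (- v / gam)). unfold Rdiv in *. set (e := exp (- v * / gam)) in *. field. split; lra.
Qed.

Lemma dr gam v : 0 < gam -> is_derive (fun v => 1 + exp (- v / gam)) v (- / gam * exp (- v / gam)).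
Proof.
intros Hg. auto_derive. auto. unfold Rdiv. set (e := exp (- v * / gam)). field. lra.
Qed.

Lemma div_nn u v : v <> 0 -> (0 <= u /\ 0 < v \/ u <= 0 /\ v < 0) -> 0 <= u / v.
Proof.
intros Hv [[H1 H2]|[H1 H2]]; unfold Rdiv.
- pose proof (Rinv_0_lt_compat v H2). nra.
- pose proof (Rinv_lt_0_compat v H2). nra.
Qed.

Theorem corollaryG1 (S : R -> Prop) (gam : R) (Q q : R -> R) :
  is_interval S ->
  (exists a b, S a /\ S b /\ a < b) ->
  0 < gam ->
  (forall z, S z -> is_derive_within S Q z (q z)) ->
  C2_on S (Hsp gam Q) ->
  ((forall s dHs, S s -> is_derive_within S (Hsp gam Q) s dHs ->
      convex_on S (fun sh => matching_loss (Hsp gam Q) dHs s sh))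
   <->
   (forall z dq, S z -> is_derive_within S q z dq ->
      dq + / gam * (1 - psp gam Q z) * (q z) ^ 2 >= 0)).
Proof.
intros HI [a [b [Sa [Sb ab]]]] Hg HQ [f1 [f2 HC]].
assert (Pp : forall z, psp gam Q z = sig gam (Q z)) by reflexivity.
assert (F1 : forall z, S z -> f1 z = psp gam Q z * q z).
{ intros z Sz. destruct (HC z Sz) as [H1 _].
  pose proof (deriv_chain S Q _ z (q z) _ (HQ z Sz) (dH gam (Q z) Hg)) as H2.
  rewrite Pp. apply (deriv_unique S a b (Hsp gam Q) z); auto. }
assert (Dp : forall z, S z -> is_derive_within S (psp gam Q) z
            (/ gam * sig gam (Q z) * (1 - sig gam (Q z)) * q z)).
{ intros z Sz. exact (deriv_chain S Q _ z (q z) _ (HQ z Sz) (dp gam (Q z) Hg)). }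
assert (F2 : forall z dq, S z -> is_derive_within S q z dq ->
          f2 z = psp gam Q z * (dq + / gam * (1 - psp gam Q z) * (q z) ^ 2)).
{ intros z dq Sz Hq.
  pose proof (deriv_mult S _ _ z _ _ (Dp z Sz) Hq) as H1.
  assert (H2 : is_derive_within S f1 z
     (/ gam * sig gam (Q z) * (1 - sig gam (Q z)) * q z * q z + psp gam Q z * dq)).
  { apply (deriv_ext S (fun y => psp gam Q y * q y)); auto. intros y Sy. symmetry; auto. }
  destruct (HC z Sz) as [_ [H3 _]].
  rewrite (deriv_unique S a b f1 z _ _ HI Sa Sb ab Sz H3 H2). rewrite Pp. ring. }
split.
- intros Hml z dq Sz Hq.
  destruct (HC a Sa) as [Ha _].
  pose proof (Hml a (f1 a) Sa Ha) as Hcv.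
  assert (Hc : convex_on S (Hsp gam Q)).
  { intros x y t Sx Sy Ht. specialize (Hcv x y t Sx Sy Ht). unfold matching_loss in Hcv.
    assert (E : (t * x + (1 - t) * y - a) * f1 a = t * ((x - a) * f1 a) + (1 - t) * ((y - a) * f1 a)) by ring.
    lra. }
  assert (Hm : forall x y, S x -> S y -> x <= y -> f1 x <= f1 y).
  { apply (convex_mono S (Hsp gam Q) f1 HI Hc). intros x Sx. apply Dl_equiv. apply HC; auto. }
  assert (f2 z >= 0).
  { apply Rle_ge. apply (lim_nonneg S f1 z (f2 z) a b HI Sa Sb ab Sz).
    apply Dl_equiv. apply HC; auto.
    intros y Sy yz. apply div_nn. lra.
    destruct (Rle_lt_dec z y).
    + left. split. pose proof (Hm z y Sz Sy r). lra. lra.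
    + right. split. pose proof (Hm y z Sy Sz ltac:(lra)). lra. lra. }
  rewrite (F2 z dq Sz Hq) in H.
  pose proof (sig_pos gam (Q z)). rewrite <- Pp in H0.
  destruct (Rle_lt_dec 0 (dq + / gam * (1 - psp gam Q z) * q z ^ 2)). lra.
  exfalso. nra.
- intros Hcond.
  assert (Hf2 : forall z, S z -> 0 <= f2 z).
  { intros z Sz.
    pose proof (deriv_chain S Q _ z (q z) _ (HQ z Sz) (dr gam (Q z) Hg)) as Hr.
    destruct (HC z Sz) as [_ [H1 _]].
    pose proof (deriv_mult S _ _ z _ _ H1 Hr) as H2.
    assert (Hq : is_derive_within S q z
       (f2 z * (1 + exp (- Q z / gam)) + f1 z * (- / gam * exp (- Q z / gam) * q z))).
    { apply (deriv_ext S (fun y => f1 y * (1 + exp (- Q y / gam)))); auto.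
      intros y Sy. rewrite F1; auto. unfold psp.
      pose proof (exp_pos (- Q y / gam)). field. lra. }
    specialize (Hcond z _ Sz Hq). rewrite (F2 z _ Sz Hq).
    pose proof (sig_pos gam (Q z)). rewrite <- Pp in H. nra. }
  assert (Hm : forall x y, S x -> S y -> x <= y -> f1 x <= f1 y).
  { intros x y Sx Sy xy. apply (mono S f1 f2 x y HI); auto.
    intros t St. split. apply Dl_equiv. apply HC; auto. auto. }
  assert (Hc : convex_on S (Hsp gam Q)).
  { apply (convex_of_tangent S _ f1 HI). apply (tangent S _ f1 HI); auto.
    intros x Sx. apply Dl_equiv. apply HC; auto. }
  intros s dHs Ss Hs x y t Sx Sy Ht. specialize (Hc x y t Sx Sy Ht). unfold matching_loss.
  assert (E : (t * x + (1 - t) * y - s) * dHs = t * ((x - s) * dHs) + (1 - t) * ((y - s) * dHs)) by ring.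
  lra.
Qed.
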